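(* Define on $(0,\pi/2)$ \[ A(x)=(\sin x-x\cos x)^2\cos x,\quad B(x)=x(\sin x-x\cos x)\sin^2x,\quad C(x)=-(2x^2\cos x-x\sin x-\cos x\sin^2x), \] and $g_2(x)=\dfrac{C(x)-\frac85A(x)}{B(x)-3A(x)}$. Then (i) $B(x)-3A(x)>0$ for $x\in(0,\pi/2)$; (ii) $g_2$ is increasing on $(0,\pi/2)$ and $\frac{34}{35}<g_2(x)<1$ for $x\in(0,\pi/2)$. *)

(* Defs.v *)
From Stdlib Require Import Reals.
Open Scope R_scope.

Definition A (x : R) : R := (sin x - x * cos x) ^ 2 * cos x.
Definition B (x : R) : R := x * (sin x - x * cos x) * (sin x) ^ 2.
Definition C (x : R) : R := - (2 * x ^ 2 * cos x - x * sin x - cos x * (sin x) ^ 2).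
Definition g2 (x : R) : R := (C x - 8/5 * A x) / (B x - 3 * A x).

(* Main.v *)
Require Import Defs.
From Stdlib Require Import Reals Lra Lia QArith Qreals List ZArith Machin.
From Coquelicot Require Import Coquelicot.
Require Import Defs.
Import ListNotations.
Open Scope R_scope.

Arguments Qred : simpl never.
Arguments Qplus : simpl never.
Arguments Qmult : simpl never.
Definition qpoly := list Q.
Fixpoint peval (P:qpoly) (x:R) : R :=
  match P with nil => 0 | c::P' => Q2R c + x * peval P' x end.
Fixpoint padd (P Q0: qpoly) : qpoly :=
  match P, Q0 with
  | nil, _ => Q0
  | _, nil => P
  | a::P', b::Q' => Qred (a+b) :: padd P' Q'
  end.
Definition pscale (c:Q) (P:qpoly) : qpoly := map (fun x => Qred (c*x)) P.
Fixpoint pmul (P Q0: qpoly) : qpoly :=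
  match P with nil => nil | a::P' => padd (pscale a Q0) (0%Q :: pmul P' Q0) end.
Fixpoint ppow (P:qpoly) (n:nat) : qpoly :=
  match n with O => [1%Q] | S n' => pmul P (ppow P n') end.

Lemma Q2R_0 : Q2R 0 = 0.
Proof. unfold Q2R; simpl; field. Qed.
Lemma Q2R_1 : Q2R 1 = 1.
Proof. unfold Q2R; simpl; field. Qed.
Lemma Q2R_red q : Q2R (Qred q) = Q2R q.
Proof. apply Qeq_eqR, Qred_correct. Qed.

Lemma peval_add P Q0 x : peval (padd P Q0) x = peval P x + peval Q0 x.
Proof.
  revert Q0; induction P as [|a P IH]; intros [|b Q0]; simpl; try ring.
  rewrite IH, Q2R_red, Q2R_plus; ring.
Qed.
Lemma peval_scale c P x : peval (pscale c P) x = Q2R c * peval P x.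
Proof.
  induction P as [|a P IH]; simpl; [ring|].
  rewrite IH, Q2R_red, Q2R_mult; ring.
Qed.
Lemma peval_mul P Q0 x : peval (pmul P Q0) x = peval P x * peval Q0 x.
Proof.
  induction P as [|a P IH]; simpl; [ring|].
  rewrite peval_add, peval_scale; simpl; rewrite IH, Q2R_0; ring.
Qed.
Lemma peval_pow P n x : peval (ppow P n) x = (peval P x) ^ n.
Proof.
  induction n; simpl; [rewrite Q2R_1; ring|].
  rewrite peval_mul, IHn; ring.
Qed.

Fixpoint hm (n:nat) (P:qpoly) (ab cd:qpoly) : qpoly :=
  match P with
  | nil => nil
  | p::P' => padd (pscale p (ppow cd n)) (pmul ab (hm (pred n) P' ab cd))
  end.

Lemma hm_correct P : forall n ab cd v, (length P <= S n)%nat -> peval cd v <> 0 ->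
  peval (hm n P ab cd) v = (peval cd v)^n * peval P (peval ab v / peval cd v).
Proof.
  induction P as [|p P IH]; intros n ab cd v Hl Hcd; simpl; [ring|].
  rewrite peval_add, peval_scale, peval_mul, peval_pow.
  destruct n as [|n].
  - simpl in Hl. destruct P; [|simpl in Hl; lia]. simpl. ring.
  - simpl pred. rewrite IH by (simpl in Hl; lia || assumption).
    simpl. field. assumption.
Qed.

Definition qnn (x:Q) : bool := Qle_bool 0 x.
Definition qpos (x:Q) : bool := negb (Qle_bool x 0).
Lemma qnn_ok x : qnn x = true -> 0 <= Q2R x.
Proof. unfold qnn; intro H; apply Qle_bool_iff in H; rewrite <- Q2R_0; now apply Qle_Rle. Qed.
Lemma qpos_ok x : qpos x = true -> 0 < Q2R x.
Proof.
  unfold qpos; intro H. apply negb_true_iff in H.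
  destruct (Qlt_le_dec 0 x) as [h|h].
  - rewrite <- Q2R_0; now apply Qlt_Rlt.
  - apply Qle_bool_iff in h; congruence.
Qed.

Lemma allnn_ok M s : forallb qnn M = true -> 0 <= s -> 0 <= peval M s.
Proof.
  induction M as [|a M IH]; simpl; intros H Hs; [lra|].
  apply andb_true_iff in H as [H1 H2].
  pose proof (qnn_ok _ H1). pose proof (IH H2 Hs). nra.
Qed.
Lemma headpos_ok a M s : qpos a = true -> forallb qnn M = true -> 0 <= s -> 0 < peval (a::M) s.
Proof.
  intros H1 H2 Hs; simpl. pose proof (qpos_ok _ H1). pose proof (allnn_ok _ _ H2 Hs). nra.
Qed.
Lemma somepos_ok M s : forallb qnn M = true -> existsb qpos M = true -> 0 < s -> 0 < peval M s.
Proof.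
  induction M as [|a M IH]; simpl; intros H1 H2 Hs; [discriminate|].
  apply andb_true_iff in H1 as [Ha HM].
  pose proof (qnn_ok _ Ha). pose proof (allnn_ok _ _ HM (Rlt_le _ _ Hs)).
  apply orb_true_iff in H2 as [H2|H2].
  - pose proof (qpos_ok _ H2). nra.
  - pose proof (IH HM H2 Hs). nra.
Qed.


Definition qleq (P Q0:qpoly) : bool :=
  forallb (fun a => Qeq_bool a 0) (padd P (pscale (-1) Q0)).
Lemma qzero_ok P x : forallb (fun a => Qeq_bool a 0) P = true -> peval P x = 0.
Proof.
  induction P as [|a P IH]; cbn [forallb peval]; intros H; [reflexivity|].
  apply andb_true_iff in H as [H1 H2]. apply Qeq_bool_iff in H1.
  rewrite (Qeq_eqR _ _ H1), Q2R_0, IH by auto. ring.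
Qed.
Lemma qleq_ok P Q0 x : qleq P Q0 = true -> peval P x = peval Q0 x.
Proof.
  unfold qleq; intro H. pose proof (qzero_ok _ x H) as E.
  rewrite peval_add, peval_scale in E.
  assert (Q2R (-1) = -1) by (unfold Q2R; simpl; field). lra.
Qed.

Definition zpoly := list Z.
Fixpoint zeval (P:zpoly) (x:R) : R :=
  match P with nil => 0 | c::P' => IZR c + x * zeval P' x end.
Fixpoint zadd (P Q0: zpoly) : zpoly :=
  match P, Q0 with nil, _ => Q0 | _, nil => P | a::P', b::Q' => (a+b)%Z :: zadd P' Q' end.
Definition zscale (c:Z) (P:zpoly) := map (fun x => (c*x)%Z) P.
Fixpoint zmul (P Q0: zpoly) : zpoly :=
  match P with nil => nil | a::P' => zadd (zscale a Q0) (0%Z :: zmul P' Q0) end.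
Fixpoint zhmr (ab cd:zpoly) (P:zpoly) : zpoly * zpoly :=
  match P with
  | nil => (nil, [1%Z])
  | p::P' => let (H, pw) := zhmr ab cd P' in (zadd (zscale p pw) (zmul ab H), zmul cd pw)
  end.
Lemma zeval_add P Q0 x : zeval (zadd P Q0) x = zeval P x + zeval Q0 x.
Proof.
  revert Q0; induction P as [|a P IH]; intros [|b Q0]; cbn [zadd zeval]; try ring.
  rewrite IH, plus_IZR; ring.
Qed.
Lemma zeval_scale c P x : zeval (zscale c P) x = IZR c * zeval P x.
Proof.
  induction P as [|a P IH]; cbn [zscale map zeval] in *; [ring|].
  unfold zscale in IH. rewrite IH, mult_IZR; ring.
Qed.
Lemma zeval_mul P Q0 x : zeval (zmul P Q0) x = zeval P x * zeval Q0 x.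
Proof.
  induction P as [|a P IH]; cbn [zmul zeval]; [ring|].
  rewrite zeval_add, zeval_scale; cbn [zeval]; rewrite IH; ring.
Qed.
Lemma zhmr_correct ab cd P v : zeval cd v <> 0 ->
  zeval (snd (zhmr ab cd P)) v = (zeval cd v)^(length P) /\ zeval (fst (zhmr ab cd P)) v * zeval cd v = (zeval cd v)^(length P) * zeval P (zeval ab v / zeval cd v).
Proof.
  intro Hc. induction P as [|p P IH]; cbn [zhmr].
  - cbn. split; ring.
  - destruct (zhmr ab cd P) as [H pw]. cbn [fst snd] in *. destruct IH as [I1 I2].
    rewrite zeval_mul, I1. cbn [length]. split; [simpl; ring|].
    rewrite zeval_add, zeval_scale, zeval_mul, I1. cbn [zeval].
    replace ((IZR p * zeval cd v ^ length P + zeval ab v * zeval H v) * zeval cd v)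
      with (IZR p * zeval cd v ^ length P * zeval cd v + zeval ab v * (zeval H v * zeval cd v)) by ring.
    rewrite I2. simpl pow. field. exact Hc.
Qed.

Definition qnnz (x:Z) : bool := Z.leb 0 x.
Definition qposz (x:Z) : bool := Z.ltb 0 x.
Lemma allnnz_ok M s : forallb qnnz M = true -> 0 <= s -> 0 <= zeval M s.
Proof.
  induction M as [|a M IH]; cbn [forallb zeval]; intros H Hs; [lra|].
  apply andb_true_iff in H as [H1 H2]. apply Z.leb_le in H1. apply IZR_le in H1.
  pose proof (IH H2 Hs). nra.
Qed.
Lemma somepos_okz M s : forallb qnnz M = true -> existsb qposz M = true -> 0 < s -> 0 < zeval M s.
Proof.
  induction M as [|a M IH]; cbn [forallb existsb zeval]; intros H1 H2 Hs; [discriminate|].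
  apply andb_true_iff in H1 as [Ha HM]. apply Z.leb_le in Ha. apply IZR_le in Ha.
  pose proof (allnnz_ok _ _ HM (Rlt_le _ _ Hs)).
  apply orb_true_iff in H2 as [H2|H2].
  - apply Z.ltb_lt in H2. apply IZR_lt in H2. nra.
  - pose proof (IH HM H2 Hs). nra.
Qed.

Definition denlcm (P:qpoly) : Z := fold_right (fun q acc => Z.lcm (Zpos (Qden q)) acc) 1%Z P.
Definition qtoz (P:qpoly) : zpoly := let D := denlcm P in map (fun q => Z.div (Qnum q * D) (Zpos (Qden q))) P.

Lemma zeval_map_inject P x : zeval P x = peval (map inject_Z P) x.
Proof.
  induction P as [|a P IH]; cbn [zeval peval map]; [reflexivity|].
  rewrite IH. unfold Q2R; simpl. field.
Qed.

(* interval [al,be) with al = a1/a2, be = b1/b2 *)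
Definition mobz (P:qpoly) (a1 a2 b1 b2:Z) : zpoly :=
  fst (zhmr [(a1*b2)%Z; (b1*a2)%Z] [(a2*b2)%Z; (a2*b2)%Z] (qtoz P)).
Definition convok (P:qpoly) : bool :=
  Z.ltb 0 (denlcm P) && qleq (map inject_Z (qtoz P)) (pscale (inject_Z (denlcm P)) P).
Definition chk_pos (P:qpoly) (a1 a2 b1 b2:Z) (op:bool) : bool :=
  let M := mobz P a1 a2 b1 b2 in
  convok P && Z.ltb 0 a2 && Z.ltb 0 b2 && forallb qnnz M &&
  (if op then existsb qposz M else match M with nil => false | a::_ => qposz a end).
Definition chk_nn (P:qpoly) (a1 a2 b1 b2:Z) : bool :=
  convok P && Z.ltb 0 a2 && Z.ltb 0 b2 && forallb qnnz (mobz P a1 a2 b1 b2).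

Lemma convok_ok P v : convok P = true -> 0 < IZR (denlcm P) /\ zeval (qtoz P) v = IZR (denlcm P) * peval P v.
Proof.
  unfold convok; intro H. apply andb_true_iff in H as [H1 H2].
  apply Z.ltb_lt in H1. split; [now apply IZR_lt|].
  rewrite zeval_map_inject, (qleq_ok _ _ v H2), peval_scale.
  unfold Q2R; simpl. field.
Qed.

Lemma mobz_key P a1 a2 b1 b2 v : (0 < a2)%Z -> (0 < b2)%Z ->
  IZR a1 / IZR a2 <= v < IZR b1 / IZR b2 ->
  let s := (v - IZR a1 / IZR a2) / (IZR b1 / IZR b2 - v) in
  0 <= s /\ (IZR a1 / IZR a2 < v -> 0 < s) /\
  exists K, 0 < K /\ zeval (mobz P a1 a2 b1 b2) s * K = zeval (qtoz P) v.
Proof.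
  intros Ha Hb [H1 H2] s.
  apply IZR_lt in Ha; apply IZR_lt in Hb.
  set (al := IZR a1 / IZR a2) in *. set (be := IZR b1 / IZR b2) in *.
  assert (Ea: IZR a1 = al * IZR a2) by (unfold al; field; lra).
  assert (Eb: IZR b1 = be * IZR b2) by (unfold be; field; lra).
  assert (Hs: 0 <= s) by (unfold s, Rdiv; apply Rmult_le_pos; [lra| left; apply Rinv_0_lt_compat; lra]).
  split; [exact Hs|split].
  { intro; unfold s, Rdiv; apply Rmult_lt_0_compat; [lra| apply Rinv_0_lt_compat; lra]. }
  set (cd := [(a2*b2)%Z; (a2*b2)%Z]). set (ab := [(a1*b2)%Z; (b1*a2)%Z]).
  assert (Ecd: zeval cd s = IZR a2 * IZR b2 * (1 + s)) by (unfold cd; cbn [zeval]; rewrite mult_IZR; ring).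
  assert (Hcd: 0 < zeval cd s) by (rewrite Ecd; apply Rmult_lt_0_compat; [apply Rmult_lt_0_compat|]; lra).
  destruct (zhmr_correct ab cd (qtoz P) s (Rgt_not_eq _ _ Hcd)) as [_ E].
  assert (Ev: zeval ab s / zeval cd s = v).
  { rewrite Ecd. unfold ab; cbn [zeval]. rewrite !mult_IZR, Ea, Eb. unfold s.
    field. repeat split; lra. }
  rewrite Ev in E.
  exists (zeval cd s / zeval cd s ^ length (qtoz P)).
  split.
  - apply Rmult_lt_0_compat; [lra|apply Rinv_0_lt_compat, pow_lt; lra].
  - unfold mobz. fold ab cd. apply (Rmult_eq_reg_l (zeval cd s ^ length (qtoz P))).
    + rewrite <- E. field. apply Rgt_not_eq, pow_lt; lra.
    + apply Rgt_not_eq, pow_lt; lra.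
Qed.

Lemma chk_pos_ok P a1 a2 b1 b2 op : chk_pos P a1 a2 b1 b2 op = true ->
  forall v, (if op then IZR a1 / IZR a2 < v else IZR a1 / IZR a2 <= v) -> v < IZR b1 / IZR b2 -> 0 < peval P v.
Proof.
  unfold chk_pos; intros H v Hl Hr.
  apply andb_true_iff in H as [H H5]; apply andb_true_iff in H as [H H4];
  apply andb_true_iff in H as [H H3]; apply andb_true_iff in H as [H1 H2].
  apply Z.ltb_lt in H2; apply Z.ltb_lt in H3.
  assert (Hal: IZR a1 / IZR a2 <= v) by (destruct op; lra).
  destruct (mobz_key P a1 a2 b1 b2 v H2 H3 (conj Hal Hr)) as [Hs [Hs' [K [HK E]]]].
  set (s := (v - IZR a1 / IZR a2) / (IZR b1 / IZR b2 - v)) in *.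
  destruct (convok_ok P v H1) as [HD ED].
  assert (0 < zeval (mobz P a1 a2 b1 b2) s).
  { destruct op.
    - apply somepos_okz; auto.
    - destruct (mobz P a1 a2 b1 b2) as [|a M] eqn:EM; [discriminate|].
      cbn [forallb] in H4. apply andb_true_iff in H4 as [_ H4].
      cbn [zeval]. unfold qposz in H5. apply Z.ltb_lt, IZR_lt in H5.
      pose proof (allnnz_ok M s H4 Hs). nra. }
  assert (0 < zeval (qtoz P) v) by (rewrite <- E; nra).
  rewrite ED in H0. nra.
Qed.

Lemma chk_nn_ok P a1 a2 b1 b2 : chk_nn P a1 a2 b1 b2 = true ->
  forall v, IZR a1 / IZR a2 <= v -> v < IZR b1 / IZR b2 -> 0 <= peval P v.
Proof.
  unfold chk_nn; intros H v Hl Hr.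
  apply andb_true_iff in H as [H H4];
  apply andb_true_iff in H as [H H3]; apply andb_true_iff in H as [H1 H2].
  apply Z.ltb_lt in H2; apply Z.ltb_lt in H3.
  destruct (mobz_key P a1 a2 b1 b2 v H2 H3 (conj Hl Hr)) as [Hs [_ [K [HK E]]]].
  set (s := (v - IZR a1 / IZR a2) / (IZR b1 / IZR b2 - v)) in *.
  destruct (convok_ok P v H1) as [HD ED].
  pose proof (allnnz_ok _ _ H4 Hs).
  assert (0 <= zeval (qtoz P) v) by (rewrite <- E; nra).
  rewrite ED in H0. nra.
Qed.

Definition bpoly := list qpoly.
Fixpoint beval (B:bpoly) (a v:R) : R :=
  match B with nil => 0 | b::B' => peval b v + a * beval B' a v end.
Fixpoint badd (R0 S: bpoly) : bpoly :=
  match R0, S with nil,_ => S | _,nil => R0 | r::R', s::S' => padd r s :: badd R' S' end.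
Definition mulLe (L:qpoly) (R0:bpoly) : bpoly := badd (map (pmul L) R0) (nil :: R0).
Fixpoint shift (B:bpoly) (L:qpoly) : bpoly :=
  match B with nil => nil | b::B' => badd [b] (mulLe L (shift B' L)) end.
Fixpoint bsub (B:bpoly) (L:qpoly) : qpoly :=
  match B with nil => nil | b::B' => padd b (pmul L (bsub B' L)) end.

Lemma beval_badd R0 S a v : beval (badd R0 S) a v = beval R0 a v + beval S a v.
Proof.
  revert S; induction R0 as [|r R0 IH]; intros [|s S]; cbn [badd beval]; try ring.
  rewrite IH, peval_add; ring.
Qed.
Lemma beval_mapmul L R0 a v : beval (map (pmul L) R0) a v = peval L v * beval R0 a v.
Proof.
  induction R0 as [|r R0 IH]; cbn [map beval]; [ring|]. rewrite IH, peval_mul; ring.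
Qed.
Lemma beval_mulLe L R0 e v : beval (mulLe L R0) e v = (peval L v + e) * beval R0 e v.
Proof.
  unfold mulLe. rewrite beval_badd, beval_mapmul. cbn [beval peval]. ring.
Qed.
Lemma shift_correct B L e v : beval (shift B L) e v = beval B (peval L v + e) v.
Proof.
  induction B as [|b B IH]; cbn [shift beval]; [ring|].
  rewrite beval_badd, beval_mulLe, IH. cbn [beval]. ring.
Qed.
Lemma bsub_correct B L v : peval (bsub B L) v = beval B (peval L v) v.
Proof.
  induction B as [|b B IH]; cbn [bsub beval peval]; [ring|].
  rewrite peval_add, peval_mul, IH. ring.
Qed.

Lemma beval_nn S e v : (forall c, In c S -> 0 <= peval c v) -> 0 <= e -> 0 <= beval S e v.
Proof.
  induction S as [|c S IH]; intros H He; cbn [beval]; [lra|].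
  pose proof (H c (or_introl eq_refl)).
  assert (0 <= beval S e v) by (apply IH; auto; intros; apply H; right; auto).
  nra.
Qed.

Definition chk_shift (B:bpoly) (L:qpoly) (a1 a2 b1 b2:Z) (op:bool) : bool :=
  match shift B L with
  | nil => false
  | c0::S' => chk_pos c0 a1 a2 b1 b2 op && forallb (fun c => chk_nn c a1 a2 b1 b2) S'
  end.

Lemma chk_shift_ok B L a1 a2 b1 b2 op : chk_shift B L a1 a2 b1 b2 op = true ->
  forall v a, (if op then IZR a1 / IZR a2 < v else IZR a1 / IZR a2 <= v) -> v < IZR b1 / IZR b2 ->
  peval L v <= a -> 0 < beval B a v.
Proof.
  unfold chk_shift; intros H v a Hl Hr Ha.
  replace a with (peval L v + (a - peval L v)) by ring.
  rewrite <- shift_correct.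
  destruct (shift B L) as [|c0 S'] eqn:E; [discriminate|].
  apply andb_true_iff in H as [H1 H2].
  assert (Hal: IZR a1 / IZR a2 <= v) by (destruct op; lra).
  cbn [beval].
  pose proof (chk_pos_ok _ _ _ _ _ _ H1 v Hl Hr).
  assert (0 <= beval S' (a - peval L v) v).
  { apply beval_nn; [|lra]. intros c Hc.
    rewrite forallb_forall in H2. apply (chk_nn_ok c a1 a2 b1 b2); auto. }
  nra.
Qed.

Definition chk_conc (B:bpoly) (L U:qpoly) (a1 a2 b1 b2:Z) (op:bool) : bool :=
  match B with
  | [d0;d1;d2] => chk_pos (bsub B L) a1 a2 b1 b2 op && chk_pos (bsub B U) a1 a2 b1 b2 op
                  && chk_pos (pscale (-1) d2) a1 a2 b1 b2 op
  | _ => false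
  end.

Lemma chk_conc_ok B L U a1 a2 b1 b2 op : chk_conc B L U a1 a2 b1 b2 op = true ->
  forall v a, (if op then IZR a1 / IZR a2 < v else IZR a1 / IZR a2 <= v) -> v < IZR b1 / IZR b2 ->
  peval L v <= a <= peval U v -> 0 < beval B a v.
Proof.
  unfold chk_conc; intros H v a Hl Hr Ha.
  destruct B as [|d0 [|d1 [|d2 [|]]]]; try discriminate.
  apply andb_true_iff in H as [H H3]; apply andb_true_iff in H as [H1 H2].
  pose proof (chk_pos_ok _ _ _ _ _ _ H1 v Hl Hr) as P1.
  pose proof (chk_pos_ok _ _ _ _ _ _ H2 v Hl Hr) as P2.
  pose proof (chk_pos_ok _ _ _ _ _ _ H3 v Hl Hr) as P3.
  rewrite bsub_correct in P1, P2. rewrite peval_scale in P3.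
  cbn [beval] in *.
  set (l := peval L v) in *; set (u := peval U v) in *.
  set (B0 := peval d0 v) in *; set (B1 := peval d1 v) in *; set (B2 := peval d2 v) in *.
  assert (Q2R (-1) = -1) by (unfold Q2R; simpl; field). rewrite H in P3.
  assert (HB2: B2 < 0) by lra.
  destruct (Req_dec l u) as [E|E].
  - assert (a = l) by lra. subst a. lra.
  - assert (Hlu: l < u) by lra.
    assert (Hid: (B0 + a * (B1 + a * (B2 + a * 0))) * (u - l) =
       (u - a) * (B0 + l * (B1 + l * (B2 + l * 0))) + (a - l) * (B0 + u * (B1 + u * (B2 + u * 0)))
       - B2 * (a - l) * (u - a) * (u - l)) by ring.
    assert (0 < (u - a) * (B0 + l * (B1 + l * (B2 + l * 0))) + (a - l) * (B0 + u * (B1 + u * (B2 + u * 0)))).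
    { destruct (Req_dec a l); [subst; nra|]. nra. }
    assert (0 <= - B2 * (a - l) * (u - a) * (u - l)).
    { apply Rmult_le_pos; [apply Rmult_le_pos; [apply Rmult_le_pos|]|]; lra. }
    nra.
Qed.

Definition btr (d:nat) (ab cd:qpoly) (B:bpoly) : bpoly := map (fun c => hm d c ab cd) B.
Lemma btr_correct d ab cd B a v :
  forallb (fun c => Nat.leb (length c) (S d)) B = true -> peval cd v <> 0 ->
  beval (btr d ab cd B) a v = (peval cd v)^d * beval B a (peval ab v / peval cd v).
Proof.
  intros H Hc; induction B as [|b B IH]; cbn [btr map beval] in *; [ring|].
  apply andb_true_iff in H as [H1 H2]. apply Nat.leb_le in H1.
  unfold btr in IH. rewrite IH by auto. rewrite hm_correct by auto. ring.
Qed.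

Fixpoint pderiv (P:qpoly) : qpoly :=
  match P with nil => nil | c::P' => padd P' (0%Q :: pderiv P') end.

Lemma pderiv_correct P x : derivable_pt_lim (peval P) x (peval (pderiv P) x).
Proof.
  induction P as [|c P IH]; cbn [pderiv].
  - cbn [peval]. change (derivable_pt_lim (fct_cte 0) x 0). apply derivable_pt_lim_const.
  - rewrite peval_add. cbn [peval]. rewrite Q2R_0.
    change (peval (c::P)) with (plus_fct (fct_cte (Q2R c)) (mult_fct id (peval P))).
    replace (peval P x + (0 + x * peval (pderiv P) x)) with
      (0 + (1 * peval P x + id x * peval (pderiv P) x)) by (unfold id; ring).
    apply derivable_pt_lim_plus; [apply derivable_pt_lim_const|].
    apply derivable_pt_lim_mult; [apply derivable_pt_lim_id|exact IH].
Qed.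

Definition mono (k:nat) (c:Q) : qpoly := repeat 0%Q k ++ [c].
Lemma mono_correct k c x : peval (mono k c) x = Q2R c * x^k.
Proof.
  induction k; unfold mono in *; cbn [repeat app peval] in *.
  - rewrite ?Q2R_0 ; ring.
  - rewrite IHk, Q2R_0, <- tech_pow_Rmult. ring.
Qed.

Definition atcoef (i:nat) : Q :=
  if Nat.odd i then Qmake (if Nat.even (Nat.div2 i) then 1%Z else (-1)%Z) (Pos.of_nat i) else 0%Q.
Definition atp (n:nat) : qpoly := map atcoef (seq 0 (2*n+2)).

Fixpoint qeval (P:qpoly) (x:Q) : Q :=
  match P with nil => 0%Q | c::P' => Qred (c + x * qeval P' x) end.
Lemma qeval_correct P x : Q2R (qeval P x) = peval P (Q2R x).
Proof.
  induction P as [|c P IH]; cbn [qeval peval]; [apply Q2R_0|].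
  rewrite Q2R_red, Q2R_plus, Q2R_mult, IH. reflexivity.
Qed.

Lemma atan_sign (L:qpoly) (k:nat) (c:Q) :
  qleq (pmul [1%Q;0%Q;1%Q] (pderiv L)) (padd [1%Q] (mono (2*k) c)) = true ->
  qleq [hd 0%Q L] [0%Q] = true ->
  forall t, 0 <= (atan t - peval L t) * t * (- Q2R c).
Proof.
  intros H1 H0 t.
  set (h := fun x => atan x - peval L x).
  set (h' := fun x => - Q2R c * x^(2*k) / (1 + x^2)).
  assert (Hd: forall x, derivable_pt_lim h x (h' x)).
  { intro x. unfold h, h'.
    assert (E: peval (pderiv L) x = (1 + Q2R c * x^(2*k)) / (1 + x^2)).
    { pose proof (qleq_ok _ _ x H1) as E. rewrite peval_mul, peval_add, mono_correct in E.
      cbn [peval] in E. rewrite Q2R_0, Q2R_1 in E.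
      assert (0 < 1 + x^2) by (pose proof (pow2_ge_0 x); lra).
      apply (Rmult_eq_reg_l (1 + x^2)); [|lra].
      field_simplify; [|lra]. lra. }
    replace (- Q2R c * x ^ (2 * k) / (1 + x ^ 2)) with (/ (1 + x^2) - peval (pderiv L) x).
    2:{ rewrite E. field. pose proof (pow2_ge_0 x); lra. }
    apply (derivable_pt_lim_minus atan (peval L)); [apply derivable_pt_lim_atan|apply pderiv_correct]. }
  assert (Hh0: h 0 = 0).
  { unfold h. rewrite atan_0. pose proof (qleq_ok _ _ 0 H0) as E. cbn [peval] in E.
    destruct L as [|l L]; cbn [peval hd] in *; rewrite ?Q2R_0 in *; lra. }
  assert (Hs: forall x, 0 <= h' x * (- Q2R c)).
  { intro x. unfold h'. replace (- Q2R c * x ^ (2 * k) / (1 + x ^ 2) * - Q2R c)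
      with ((Q2R c)^2 * (x^k)^2 / (1 + x^2)) by (rewrite <- pow_mult, Nat.mul_comm; field; pose proof (pow2_ge_0 x); lra).
    apply Rmult_le_pos; [apply Rmult_le_pos; apply pow2_ge_0|].
    left; apply Rinv_0_lt_compat; pose proof (pow2_ge_0 x); lra. }
  destruct (Rtotal_order t 0) as [Ht|[Ht|Ht]].
  - destruct (MVT_cor2 h h' t 0 Ht (fun c _ => Hd c)) as [z [Ez _]].
    fold (h t). rewrite Hh0 in Ez. pose proof (Hs z).
    replace ((h t) * t * - Q2R c) with ((h' z * - Q2R c) * (0 - t) * (-t)) by (rewrite <- (Rmult_comm (0 - t)); nra).
    apply Rmult_le_pos; [apply Rmult_le_pos|]; lra.
  - subst. rewrite Rmult_0_r, Rmult_0_l. lra.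
  - destruct (MVT_cor2 h h' 0 t Ht (fun c _ => Hd c)) as [z [Ez _]].
    fold (h t). rewrite Hh0 in Ez. pose proof (Hs z).
    replace ((h t) * t * - Q2R c) with ((h' z * - Q2R c) * (t - 0) * t) by nra.
    apply Rmult_le_pos; [apply Rmult_le_pos|]; lra.
Qed.

Definition PhiQ : bpoly := [[(0); (0); (0); (-45); (0); (-12); (0)]; [(0); (0); (135); (0); (87); (0); (-12)]; [(0); (-135); (0); (-114); (0); (13); (0)]; [(45); (0); (15); (0); (-25); (0); (5)]; [(0); (24); (0); (24); (0); (0); (0)]]%Q.
Definition PhihiQ : bpoly := [[(0); (0); (-12)]; [(0); (9); (0)]; [(3); (0); (5)]]%Q.
Definition PloQ : bpoly := [[(0); (0); (81); (0)]; [(0); (-57); (0); (1)]; [(-24); (0); (-36); (0)]]%Q.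
Definition qQ : bpoly := [[(0); (-3); (0)]; [(3); (0); (1)]]%Q.
Definition P0 : Q := (785398163 # 1000000000).
Definition P0up : Q := (785398164 # 1000000000).
Definition L1 := atp 9.
Definition U1 := atp 8.
Definition L2 := padd [P0] (atp 6).
Definition U2 := padd [P0up] (atp 5).
Definition L3 := padd [P0] (atp 3).
Definition U3 := padd [P0up] (atp 4).
Definition L4 := padd [Qred (2*P0)] (pscale (-1) (atp 2)).
Definition U4 := padd [Qred (2*P0up)] (pscale (-1) (atp 3)).
Definition tw (d:nat) (B:bpoly) := btr d [1;1]%Q [1;-1]%Q B.
Definition tu (d:nat) (B:bpoly) := btr d [1;0]%Q [0;1]%Q B.
Lemma c1a : chk_shift PhiQ L1 0 1 1 2 true = true. Proof. vm_compute. reflexivity. Qed.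
Lemma c1b : chk_shift PhihiQ L1 0 1 1 2 true = true. Proof. vm_compute. reflexivity. Qed.
Lemma c1c : chk_shift qQ L1 0 1 1 2 true = true. Proof. vm_compute. reflexivity. Qed.
Lemma c1d : chk_conc PloQ L1 U1 0 1 1 2 true = true. Proof. vm_compute. reflexivity. Qed.
Lemma c2a : chk_shift (tw 6 PhiQ) L2 (-7) 20 1 100 false = true. Proof. vm_compute. reflexivity. Qed.
Lemma c2b : chk_shift (tw 2 PhihiQ) L2 (-7) 20 1 100 false = true. Proof. vm_compute. reflexivity. Qed.
Lemma c2c : chk_shift (tw 2 qQ) L2 (-7) 20 1 100 false = true. Proof. vm_compute. reflexivity. Qed.
Lemma c2d : chk_conc (tw 3 PloQ) L2 U2 (-7) 20 1 100 false = true. Proof. vm_compute. reflexivity. Qed.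
Lemma c3a : chk_shift (tw 6 PhiQ) L3 0 1 51 100 false = true. Proof. vm_compute. reflexivity. Qed.
Lemma c3b : chk_shift (tw 2 PhihiQ) L3 0 1 51 100 false = true. Proof. vm_compute. reflexivity. Qed.
Lemma c3c : chk_shift (tw 2 qQ) L3 0 1 51 100 false = true. Proof. vm_compute. reflexivity. Qed.
Lemma c3d : chk_conc (tw 3 PloQ) L3 U3 0 1 51 100 false = true. Proof. vm_compute. reflexivity. Qed.
Lemma c4a : chk_shift (tu 6 PhiQ) L4 0 1 34 100 true = true. Proof. vm_compute. reflexivity. Qed.
Lemma c4b : chk_shift (tu 2 PhihiQ) L4 0 1 34 100 true = true. Proof. vm_compute. reflexivity. Qed.
Lemma c4c : chk_shift (tu 2 qQ) L4 0 1 34 100 true = true. Proof. vm_compute. reflexivity. Qed.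
Lemma c4d : chk_conc (tu 3 PloQ) L4 U4 0 1 34 100 true = true. Proof. vm_compute. reflexivity. Qed.

Lemma Q2R_int z : Q2R (Qmake z 1) = IZR z.
Proof. unfold Q2R; simpl; field. Qed.

Ltac atan_chk := vm_compute; reflexivity.

Lemma peval_0 L : peval L 0 = Q2R (hd 0%Q L).
Proof. destruct L; cbn [peval hd]; [rewrite Q2R_0|]; ring. Qed.

Lemma atan_lb_gen L k :
  qleq (pmul [1%Q;0%Q;1%Q] (pderiv L)) (padd [1%Q] (mono (2*k) (-1))) = true ->
  qleq [hd 0%Q L] [0%Q] = true ->
  (forall t, 0 <= t -> peval L t <= atan t) /\ (forall t, t <= 0 -> atan t <= peval L t).
Proof.
  intros H H0. pose proof (atan_sign L k (-1) H H0) as K.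
  assert (E1: Q2R (-1) = -1) by (unfold Q2R; simpl; field). rewrite E1 in K.
  assert (E0: peval L 0 = 0) by (rewrite peval_0; pose proof (qleq_ok _ _ 0 H0) as E; cbn [peval] in E; rewrite Q2R_0 in E; lra).
  split; intros t Ht; specialize (K t); destruct (Req_dec t 0) as [E|E];
    try (subst; rewrite atan_0, E0; lra); nra.
Qed.
Lemma atan_ub_gen L k :
  qleq (pmul [1%Q;0%Q;1%Q] (pderiv L)) (padd [1%Q] (mono (2*k) 1)) = true ->
  qleq [hd 0%Q L] [0%Q] = true ->
  (forall t, 0 <= t -> atan t <= peval L t) /\ (forall t, t <= 0 -> peval L t <= atan t).
Proof.
  intros H H0. pose proof (atan_sign L k 1 H H0) as K.
  rewrite Q2R_1 in K.
  assert (E0: peval L 0 = 0) by (rewrite peval_0; pose proof (qleq_ok _ _ 0 H0) as E; cbn [peval] in E; rewrite Q2R_0 in E; lra).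
  split; intros t Ht; specialize (K t); destruct (Req_dec t 0) as [E|E];
    try (subst; rewrite atan_0, E0; lra); nra.
Qed.

Definition lb9 := atan_lb_gen (atp 9) 10 ltac:(atan_chk) ltac:(atan_chk).
Definition ub8 := atan_ub_gen (atp 8) 9 ltac:(atan_chk) ltac:(atan_chk).
Definition ub6 := atan_ub_gen (atp 6) 7 ltac:(atan_chk) ltac:(atan_chk).
Definition lb5 := atan_lb_gen (atp 5) 6 ltac:(atan_chk) ltac:(atan_chk).
Definition lb3 := atan_lb_gen (atp 3) 4 ltac:(atan_chk) ltac:(atan_chk).
Definition ub4 := atan_ub_gen (atp 4) 5 ltac:(atan_chk) ltac:(atan_chk).
Definition ub2 := atan_ub_gen (atp 2) 3 ltac:(atan_chk) ltac:(atan_chk).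
Definition lb15 := atan_lb_gen (atp 15) 16 ltac:(atan_chk) ltac:(atan_chk).
Definition ub16 := atan_ub_gen (atp 16) 17 ltac:(atan_chk) ltac:(atan_chk).

Lemma PI4_bounds : Q2R P0 <= PI/4 <= Q2R P0up.
Proof.
  rewrite Machin_2_3.
  assert (E2: / 2 = Q2R (1#2)) by (unfold Q2R; simpl; field).
  assert (E3: / 3 = Q2R (1#3)) by (unfold Q2R; simpl; field).
  rewrite E2, E3.
  destruct lb15 as [l _]. destruct ub16 as [u _].
  assert (H2: 0 <= Q2R (1#2)) by (rewrite <- E2; lra).
  assert (H3: 0 <= Q2R (1#3)) by (rewrite <- E3; lra).
  pose proof (l _ H2). pose proof (l _ H3). pose proof (u _ H2). pose proof (u _ H3).
  rewrite <- !qeval_correct in *.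
  assert (A1: Q2R P0 <= Q2R (qeval (atp 15) (1#2)) + Q2R (qeval (atp 15) (1#3))).
  { rewrite <- Q2R_plus. apply Qle_Rle. apply Qle_bool_iff. vm_compute. reflexivity. }
  assert (A2: Q2R (qeval (atp 16) (1#2)) + Q2R (qeval (atp 16) (1#3)) <= Q2R P0up).
  { rewrite <- Q2R_plus. apply Qle_Rle. apply Qle_bool_iff. vm_compute. reflexivity. }
  lra.
Qed.

Lemma tw_eval d B a w : forallb (fun c => Nat.leb (length c) (S d)) B = true -> w <> 1 ->
  beval (tw d B) a w = (1 - w)^d * beval B a ((1+w)/(1-w)).
Proof.
  intros H Hw. unfold tw. rewrite btr_correct by (auto; cbn [peval]; rewrite ?Q2R_1, ?Q2R_int, ?Q2R_0, ?opp_IZR; lra).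
  cbn [peval]. rewrite Q2R_1, Q2R_int. replace (1 + w * (IZR (-1) + w * 0)) with (1 - w) by ring.
  replace (1 + w * (1 + w * 0)) with (1 + w) by ring. reflexivity.
Qed.
Lemma tu_eval d B a u : forallb (fun c => Nat.leb (length c) (S d)) B = true -> u <> 0 ->
  beval (tu d B) a u = u^d * beval B a (/u).
Proof.
  intros H Hu. unfold tu. rewrite btr_correct by (auto; cbn [peval]; rewrite ?Q2R_1, ?Q2R_0; lra).
  cbn [peval]. rewrite Q2R_1, Q2R_0. replace (1 + u * (0 + u * 0)) with 1 by ring.
  replace (0 + u * (1 + u * 0)) with u by ring. unfold Rdiv. rewrite Rmult_1_l. reflexivity.
Qed.

Definition allpos (a t : R) : Prop :=
  0 < beval PhiQ a t /\ 0 < beval PhihiQ a t /\ 0 < beval PloQ a t /\ 0 < beval qQ a t.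

Lemma piece1 t : 0 < t < 1/2 -> allpos (atan t) t.
Proof.
  intros [H1 H2].
  assert (HL: peval L1 t <= atan t) by (apply (proj1 lb9); lra).
  assert (HU: atan t <= peval U1 t) by (apply (proj1 ub8); lra).
  assert (Hl: IZR 0 / IZR 1 < t) by lra. assert (Hr: t < IZR 1 / IZR 2) by lra.
  repeat split.
  - exact (chk_shift_ok _ _ _ _ _ _ _ c1a t _ Hl Hr HL).
  - exact (chk_shift_ok _ _ _ _ _ _ _ c1b t _ Hl Hr HL).
  - exact (chk_conc_ok _ _ _ _ _ _ _ _ c1d t _ Hl Hr (conj HL HU)).
  - exact (chk_shift_ok _ _ _ _ _ _ _ c1c t _ Hl Hr HL).
Qed.

Lemma fin_tw d B a w t : forallb (fun c => Nat.leb (length c) (S d)) B = true -> w < 1 ->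
  (1+w)/(1-w) = t -> 0 < beval (tw d B) a w -> 0 < beval B a t.
Proof.
  intros Hl Hw Et H. rewrite tw_eval in H by (auto; lra). rewrite Et in H.
  assert (0 < (1 - w)^d) by (apply pow_lt; lra). nra.
Qed.
Lemma fin_tu d B a u t : forallb (fun c => Nat.leb (length c) (S d)) B = true -> 0 < u ->
  /u = t -> 0 < beval (tu d B) a u -> 0 < beval B a t.
Proof.
  intros Hl Hu Et H. rewrite tu_eval in H by (auto; lra). rewrite Et in H.
  assert (0 < u^d) by (apply pow_lt; lra). nra.
Qed.

Lemma atan_pos t : 0 < t -> 0 < atan t.
Proof. intro H. rewrite <- atan_0. apply atan_increasing. exact H. Qed.

Lemma atan_shift1 t : 0 < t -> atan t = PI/4 + atan ((t-1)/(t+1)).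
Proof.
  intro Ht. rewrite <- atan_1.
  replace ((t-1)/(t+1)) with (atan_sub t 1) by (unfold atan_sub; f_equal; ring).
  apply atan_sub_correct.
  - lra.
  - rewrite atan_1. pose proof (atan_bound t). pose proof (atan_pos t Ht). pose proof PI_RGT_0. lra.
  - apply atan_bound.
Qed.

Lemma piece2 t : 1/2 <= t < 1 -> allpos (atan t) t.
Proof.
  intros [H1 H2]. set (w := (t-1)/(t+1)).
  assert (Hw1: -1/3 <= w) by (unfold w; apply Rmult_le_reg_r with (t+1); [lra|]; field_simplify; lra).
  assert (Hw2: w < 0) by (unfold w, Rdiv; apply Rmult_neg_pos; [lra|apply Rinv_0_lt_compat; lra]).
  assert (Et: (1+w)/(1-w) = t) by (unfold w; field; lra).
  assert (Ea: atan t = PI/4 + atan w) by (apply atan_shift1; lra).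
  pose proof PI4_bounds.
  assert (HL: peval L2 w <= atan t).
  { unfold L2. rewrite peval_add. cbn [peval]. pose proof (proj2 ub6 w (Rlt_le _ _ Hw2)). lra. }
  assert (HU: atan t <= peval U2 w).
  { unfold U2. rewrite peval_add. cbn [peval]. pose proof (proj2 lb5 w (Rlt_le _ _ Hw2)). lra. }
  assert (Hl: IZR (-7) / IZR 20 <= w) by lra. assert (Hr: w < IZR 1 / IZR 100) by lra.
  repeat split.
  - apply (fin_tw 6 _ _ w); [vm_compute; reflexivity|lra|exact Et|].
    exact (chk_shift_ok _ _ _ _ _ _ _ c2a w _ Hl Hr HL).
  - apply (fin_tw 2 _ _ w); [vm_compute; reflexivity|lra|exact Et|].
    exact (chk_shift_ok _ _ _ _ _ _ _ c2b w _ Hl Hr HL).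
  - apply (fin_tw 3 _ _ w); [vm_compute; reflexivity|lra|exact Et|].
    exact (chk_conc_ok _ _ _ _ _ _ _ _ c2d w _ Hl Hr (conj HL HU)).
  - apply (fin_tw 2 _ _ w); [vm_compute; reflexivity|lra|exact Et|].
    exact (chk_shift_ok _ _ _ _ _ _ _ c2c w _ Hl Hr HL).
Qed.

Lemma piece3 t : 1 <= t < 3 -> allpos (atan t) t.
Proof.
  intros [H1 H2]. set (w := (t-1)/(t+1)).
  assert (Hw1: 0 <= w) by (unfold w, Rdiv; apply Rmult_le_pos; [lra|left; apply Rinv_0_lt_compat; lra]).
  assert (Hw2: w < 1/2) by (unfold w; apply Rmult_lt_reg_r with (t+1); [lra|]; field_simplify; lra).
  assert (Et: (1+w)/(1-w) = t) by (unfold w; field; lra).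
  assert (Ea: atan t = PI/4 + atan w) by (apply atan_shift1; lra).
  pose proof PI4_bounds.
  assert (HL: peval L3 w <= atan t).
  { unfold L3. rewrite peval_add. cbn [peval]. pose proof (proj1 lb3 w Hw1). lra. }
  assert (HU: atan t <= peval U3 w).
  { unfold U3. rewrite peval_add. cbn [peval]. pose proof (proj1 ub4 w Hw1). lra. }
  assert (Hl: IZR 0 / IZR 1 <= w) by lra. assert (Hr: w < IZR 51 / IZR 100) by lra.
  repeat split.
  - apply (fin_tw 6 _ _ w); [vm_compute; reflexivity|lra|exact Et|].
    exact (chk_shift_ok _ _ _ _ _ _ _ c3a w _ Hl Hr HL).
  - apply (fin_tw 2 _ _ w); [vm_compute; reflexivity|lra|exact Et|].
    exact (chk_shift_ok _ _ _ _ _ _ _ c3b w _ Hl Hr HL).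
  - apply (fin_tw 3 _ _ w); [vm_compute; reflexivity|lra|exact Et|].
    exact (chk_conc_ok _ _ _ _ _ _ _ _ c3d w _ Hl Hr (conj HL HU)).
  - apply (fin_tw 2 _ _ w); [vm_compute; reflexivity|lra|exact Et|].
    exact (chk_shift_ok _ _ _ _ _ _ _ c3c w _ Hl Hr HL).
Qed.

Lemma piece4 t : 3 <= t -> allpos (atan t) t.
Proof.
  intros H1. set (u := / t).
  assert (Hu1: 0 < u) by (unfold u; apply Rinv_0_lt_compat; lra).
  assert (Hu2: u <= 1/3) by (unfold u; apply Rmult_le_reg_r with t; [lra|]; field_simplify; lra).
  assert (Et: / u = t) by (unfold u; field; lra).
  assert (Ea: atan t = 2 * (PI/4) - atan u) by (unfold u; rewrite atan_inv by lra; lra).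
  pose proof PI4_bounds.
  assert (E2: forall q, Q2R (Qred (2 * q)) = 2 * Q2R q) by (intro; rewrite Q2R_red, Q2R_mult; unfold Q2R at 1; simpl; field).
  assert (HL: peval L4 u <= atan t).
  { unfold L4. rewrite peval_add, peval_scale. cbn [peval]. rewrite E2.
    pose proof (proj1 ub2 u (Rlt_le _ _ Hu1)). assert (Q2R (-1) = -1) by (unfold Q2R; simpl; field). lra. }
  assert (HU: atan t <= peval U4 u).
  { unfold U4. rewrite peval_add, peval_scale. cbn [peval]. rewrite E2.
    pose proof (proj1 lb3 u (Rlt_le _ _ Hu1)). assert (Q2R (-1) = -1) by (unfold Q2R; simpl; field). lra. }
  assert (Hl: IZR 0 / IZR 1 < u) by lra. assert (Hr: u < IZR 34 / IZR 100) by lra.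
  repeat split.
  - apply (fin_tu 6 _ _ u); [vm_compute; reflexivity|lra|exact Et|].
    exact (chk_shift_ok _ _ _ _ _ _ _ c4a u _ Hl Hr HL).
  - apply (fin_tu 2 _ _ u); [vm_compute; reflexivity|lra|exact Et|].
    exact (chk_shift_ok _ _ _ _ _ _ _ c4b u _ Hl Hr HL).
  - apply (fin_tu 3 _ _ u); [vm_compute; reflexivity|lra|exact Et|].
    exact (chk_conc_ok _ _ _ _ _ _ _ _ c4d u _ Hl Hr (conj HL HU)).
  - apply (fin_tu 2 _ _ u); [vm_compute; reflexivity|lra|exact Et|].
    exact (chk_shift_ok _ _ _ _ _ _ _ c4c u _ Hl Hr HL).
Qed.

Lemma allpos_all t : 0 < t -> allpos (atan t) t.
Proof.
  intro H.
  destruct (Rlt_le_dec t (1/2)); [apply piece1; lra|].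
  destruct (Rlt_le_dec t 1); [apply piece2; lra|].
  destruct (Rlt_le_dec t 3); [apply piece3; lra|].
  apply piece4; lra.
Qed.

Definition pp a t := t - a.
Definition mm a t := a*(1+t^2) - t.
Definition qq a t := a*(t^2+3) - 3*t.

Lemma Phi_eq a t : beval PhiQ a t =
  5*mm a t*(qq a t)^2 + 12*(pp a t)^2*t^2*qq a t - 24*t*(pp a t)^3*mm a t.
Proof. unfold PhiQ, pp, mm, qq; cbn [beval peval]. rewrite ?Q2R_int. ring. Qed.
Lemma Phihi_eq a t : beval PhihiQ a t = -(5*pp a t*qq a t + 12*(pp a t)^2 - 5*t*qq a t).
Proof. unfold PhihiQ, pp, mm, qq; cbn [beval peval]. rewrite ?Q2R_int. ring. Qed.
Lemma Plo_eq a t : beval PloQ a t = 36*pp a t*qq a t + 84*(pp a t)^2 - 35*t*qq a t.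
Proof. unfold PloQ, pp, mm, qq; cbn [beval peval]. rewrite ?Q2R_int. ring. Qed.
Lemma q_eq a t : beval qQ a t = qq a t.
Proof. unfold qQ, pp, mm, qq; cbn [beval peval]. rewrite ?Q2R_int. ring. Qed.

Lemma tan_is_derive x : 0 < x < PI/2 -> is_derive tan x (1 + tan x ^ 2).
Proof.
  intro H. apply is_derive_Reals.
  assert (Hx: -PI/2 < x < PI/2) by (pose proof PI_RGT_0; lra).
  apply (derive_pt_eq_1 tan x _ (derivable_pt_tan x Hx)).
  apply derive_pt_tan.
Qed.

Lemma tan_gt_x x : 0 < x < PI/2 -> x < tan x.
Proof.
  intro H.
  assert (D: forall c, 0 <= c <= x -> derivable_pt_lim (fun z => tan z - z) c (tan c ^ 2)).
  { intros c Hc. replace (tan c ^ 2) with ((1 + tan c ^2) - 1) by ring.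
    apply derivable_pt_lim_minus; [|apply derivable_pt_lim_id].
    assert (Hx: -PI/2 < c < PI/2) by (pose proof PI_RGT_0; lra).
    apply (derive_pt_eq_1 tan c _ (derivable_pt_tan c Hx)). apply derive_pt_tan. }
  destruct (MVT_cor2 (fun z => tan z - z) (fun c => tan c ^ 2) 0 x (proj1 H) D) as [c [E Hc]].
  rewrite tan_0 in E.
  assert (0 < tan c) by (apply tan_gt_0; lra).
  assert (0 < tan c ^ 2 * (x - 0)) by (apply Rmult_lt_0_compat; [apply pow_lt|]; lra).
  lra.
Qed.

Definition hh x := 2 + 12/5 * ((tan x - x)/(x*(tan x^2+3) - 3*tan x)) - tan x/(tan x - x).

Lemma facts x : 0 < x < PI/2 ->
  0 < pp x (tan x) /\ 0 < qq x (tan x) /\ 0 < beval PhiQ x (tan x) /\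
  0 < beval PhihiQ x (tan x) /\ 0 < beval PloQ x (tan x).
Proof.
  intro H. pose proof (tan_gt_x x H).
  assert (Ht: 0 < tan x) by (apply tan_gt_0; lra).
  pose proof (allpos_all _ Ht) as [A1 [A2 [A3 A4]]].
  rewrite atan_tan in A1, A2, A3, A4 by (pose proof PI_RGT_0; lra).
  rewrite q_eq in A4. unfold pp. repeat split; lra.
Qed.

Lemma hh_derive x : 0 < x < PI/2 ->
  is_derive hh x (beval PhiQ x (tan x) / (5 * (pp x (tan x))^2 * (qq x (tan x))^2)).
Proof.
  intro H. destruct (facts x H) as [Hp [Hq _]].
  unfold pp, qq in *.
  pose proof (tan_is_derive x H) as Dt.
  unfold hh. auto_derive.
  - repeat split; try (exists (1 + tan x ^ 2); exact Dt); try lra.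
  - replace (Derive (fun x0 => tan x0) x) with (1 + tan x ^ 2) by (symmetry; apply is_derive_unique; exact Dt).
    rewrite Phi_eq. unfold pp, mm, qq. field. split; lra.
Qed.


Lemma BA_eq x : cos x <> 0 -> B x - 3 * A x = cos x ^ 3 * pp x (tan x) * qq x (tan x).
Proof. intro Hc. unfold B, A, pp, qq, tan. field. exact Hc. Qed.

Lemma CA_eq x : cos x <> 0 -> C x - 8/5 * A x =
  cos x ^ 3 * (2 * pp x (tan x) * qq x (tan x) + 12/5 * (pp x (tan x))^2 - tan x * qq x (tan x)).
Proof.
  intro Hc. pose proof (sin2_cos2 x) as Hsc. unfold Rsqr in Hsc.
  unfold C, A, pp, qq, tan.
  transitivity (cos x ^ 3 * (2 * (sin x / cos x - x) * (x * ((sin x / cos x) ^ 2 + 3) - 3 * (sin x / cos x)) +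
   12 / 5 * (sin x / cos x - x) ^ 2 - sin x / cos x * (x * ((sin x / cos x) ^ 2 + 3) - 3 * (sin x / cos x)))
   + (sin x * sin x + cos x * cos x - 1) * (- x * sin x + 2 * x^2 * cos x)).
  - field. exact Hc.
  - rewrite Hsc. ring.
Qed.

Lemma g2_eq x : 0 < x < PI/2 -> g2 x = hh x.
Proof.
  intro H. destruct (facts x H) as [Hp [Hq _]].
  assert (Hc: 0 < cos x) by (apply cos_gt_0; pose proof PI_RGT_0; lra).
  unfold g2. rewrite BA_eq, CA_eq by lra. unfold hh. unfold pp, qq in *.
  field. repeat split; try lra; try (apply pow_nonzero; lra).
Qed.

Theorem lemma7 :
  (forall x : R, 0 < x < PI / 2 -> B x - 3 * A x > 0) /\
  (forall x y : R, 0 < x < PI / 2 -> 0 < y < PI / 2 -> x < y -> g2 x < g2 y) /\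
  (forall x : R, 0 < x < PI / 2 -> 34 / 35 < g2 x < 1).
Proof.
  split; [|split].
  - intros x H. destruct (facts x H) as [Hp [Hq _]].
    assert (Hc: 0 < cos x) by (apply cos_gt_0; pose proof PI_RGT_0; lra).
    rewrite BA_eq by lra. apply Rlt_gt.
    apply Rmult_lt_0_compat; [apply Rmult_lt_0_compat; [apply pow_lt|]|]; lra.
  - intros x y Hx Hy Hxy. rewrite !g2_eq by assumption.
    assert (D: forall c, x <= c <= y -> derivable_pt_lim hh c
       (beval PhiQ c (tan c) / (5 * (pp c (tan c))^2 * (qq c (tan c))^2))).
    { intros c Hc. apply is_derive_Reals. apply hh_derive. lra. }
    destruct (MVT_cor2 hh _ x y Hxy D) as [c [E Hc]].
    assert (Hc': 0 < c < PI/2) by lra.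
    destruct (facts c Hc') as [Hp [Hq [HP _]]].
    assert (0 < beval PhiQ c (tan c) / (5 * pp c (tan c) ^ 2 * qq c (tan c) ^ 2)).
    { apply Rdiv_lt_0_compat; [lra|]. apply Rmult_lt_0_compat; [apply Rmult_lt_0_compat|]; try apply pow_lt; lra. }
    assert (0 < beval PhiQ c (tan c) / (5 * pp c (tan c) ^ 2 * qq c (tan c) ^ 2) * (y - x)) by (apply Rmult_lt_0_compat; lra).
    lra.
  - intros x H. rewrite g2_eq by assumption. destruct (facts x H) as [Hp [Hq [_ [Hhi Hlo]]]].
    rewrite Phihi_eq in Hhi. rewrite Plo_eq in Hlo. unfold hh. unfold pp, qq in *.
    set (t := tan x) in *. set (p := t - x) in *. set (q := x * (t^2+3) - 3*t) in *.
    split.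
    + apply (Rmult_lt_reg_r (35 * p * q)); [apply Rmult_lt_0_compat; lra|].
      replace ((2 + 12 / 5 * (p / q) - t / p) * (35 * p * q)) with (70*p*q + 84*p^2 - 35*t*q) by (field; lra).
      nra.
    + apply (Rmult_lt_reg_r (5 * p * q)); [apply Rmult_lt_0_compat; lra|].
      replace ((2 + 12 / 5 * (p / q) - t / p) * (5 * p * q)) with (10*p*q + 12*p^2 - 5*t*q) by (field; lra).
      nra.
Qed.
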